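(* Let $d \geq 2$, $n$, $k$ and $j$ be positive integers with $k \leq n$, and suppose that either ($n \geq 2k$ and $j < k$) or ($n < 2k$ and $j < n-k$). Then there exist a point set $P \subseteq [0,1]^d$ with $|P| = n$ and a subset $S \subseteq P$ with $|S| = k$ such that $S$ is a local minimum of the $k$-SDSSP-$j$ problem on $P$ (i.e., no $j$-swap applied to $S$ yields a $k$-subset of $P$ with strictly smaller $L_\infty$ star discrepancy), but $S$ is not a global minimum (i.e., there is a subset $S' \subseteq P$ with $|S'| = k$ and $d_\infty^*(S') < d_\infty^*(S)$).
   Context: For a finite point set $Q \subseteq [0,1]^d$, its $L_\infty$ star discrepancy is $d_\infty^*(Q) := \sup_{q \in [0,1]^d} \left| \frac{|Q \cap [0,q)|}{|Q|} - \lambda([0,q)) \right|$, where $[0,q) = [0,q_1) \times \cdots \times [0,q_d)$ and $\lambda$ denotes Lebesgue measure. Given a point set $P \subseteq [0,1]^d$ with $|P| = n$ and a subset $S \subseteq P$ with $|S| = k$, a $j$-swap replaces $S$ by $(S \setminus A) \cup B$ where $A \subseteq S$ and $B \subseteq P \setminus S$ with $|A| = |B| = j$ (i.e., $j$ points of $S$ are simultaneously replaced by $j$ points of $P$ not in $S$). The $k$-SDSSP-$j$ problem is the problem of obtaining a subset of $P$ of size $k$ of minimal $L_\infty$ star discrepancy by only performing improving $j$-swaps (swaps that strictly decrease the star discrepancy); a local minimum of this problem is a $k$-subset from which no $j$-swap strictly decreases the star discrepancy, and a global minimum is a $k$-subset whose star discrepancy is minimal among all $k$-subsets of $P$. *)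

(* Defs.v *)
From HB Require Import structures.
From mathcomp Require Import all_boot all_order all_algebra.
From mathcomp Require Import boolp classical_sets reals.
Set Implicit Arguments. Unset Strict Implicit. Unset Printing Implicit Defensive.
Import Order.TTheory GRing.Theory Num.Theory.
Local Open Scope ring_scope.
Local Open Scope classical_set_scope.

Definition in_unit_cube (R : realType) (d : nat) (q : 'I_d -> R) : Prop :=
  forall i : 'I_d, 0 <= q i <= 1.

Definition in_box (R : realType) (d : nat) (x q : 'I_d -> R) : bool :=
  [forall i : 'I_d, (0 <= x i) && (x i < q i)].

Definition box_vol (R : realType) (d : nat) (q : 'I_d -> R) : R :=
  \prod_(i < d) q i.

(* A point set of size n is an injective family P : 'I_n -> [0,1]^d;
   a subset of it is given by a set of indices S : {set 'I_n}.
   L_infty star discrepancy of the point set {P i | i in S}. *)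
Definition star_disc (R : realType) (d n : nat) (P : 'I_n -> 'I_d -> R)
  (S : {set 'I_n}) : R :=
  sup [set e | exists q : 'I_d -> R, in_unit_cube q /\
        e = `| (#|[set i in S | in_box (P i) q]|%:R / #|S|%:R) - box_vol q |].

Definition is_j_swap (n j : nat) (S S' : {set 'I_n}) : Prop :=
  exists (A B : {set 'I_n}), [/\ A \subset S, B \subset ~: S,
     #|A| = j, #|B| = j & S' = (S :\: A) :|: B].

Definition local_min_SDSSP (R : realType) (d n j : nat)
  (P : 'I_n -> 'I_d -> R) (S : {set 'I_n}) : Prop :=
  forall S' : {set 'I_n}, is_j_swap j S S' -> ~ (star_disc P S' < star_disc P S).

Definition global_min_SDSSP (R : realType) (d n k : nat)
  (P : 'I_n -> 'I_d -> R) (S : {set 'I_n}) : Prop :=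
  forall S' : {set 'I_n}, #|S'| = k -> star_disc P S <= star_disc P S'.

(* Main.v *)
Require Import Defs.
From HB Require Import structures.
From mathcomp Require Import all_boot all_order all_algebra.
From mathcomp Require Import boolp classical_sets reals.
From mathcomp Require Import ring lra zify.
Import Order.TTheory GRing.Theory Num.Theory.
Local Open Scope ring_scope.
Local Open Scope classical_set_scope.
Set Implicit Arguments. Unset Strict Implicit.

Lemma vol_01 (R : realType) d (q : 'I_d -> R) :
  in_unit_cube q -> 0 <= box_vol q <= 1.
Proof.
move=> hq; rewrite /box_vol; apply/andP; split.
  by apply: prodr_ge0 => i _; case/andP: (hq i).
by apply: prodr_ile1 => i _; exact: hq.
Qed.

Lemma frac_01 (R : realType) (c s : nat) : (c <= s)%N ->
  0 <= (c%:R : R) / s%:R <= 1.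
Proof.
move=> hcs; apply/andP; split; first by rewrite divr_ge0.
case: s hcs => [|s] hcs; first by rewrite invr0 mulr0.
by rewrite ler_pdivrMr ?ltr0Sn // mul1r ler_nat.
Qed.

Lemma disc_ge (R : realType) d n (P : 'I_n -> 'I_d -> R) (X : {set 'I_n}) q :
  in_unit_cube q ->
  `| (#|[set i in X | in_box (P i) q]|%:R / #|X|%:R) - box_vol q | <= star_disc P X.
Proof.
move=> hq; apply: ub_le_sup; last by exists q.
exists 1 => e [q' [hq' ->]].
have /andP[v0 v1] := vol_01 hq'.
have /andP[f0 f1] : 0 <= (#|[set i in X | in_box (P i) q']|%:R : R) / #|X|%:R <= 1.
  by apply: frac_01; apply: subset_leq_card; apply/fintype.subsetP => i; rewrite inE => /andP[].
rewrite ler_norml; apply/andP; split; lra.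
Qed.

Lemma disc_le (R : realType) d n (P : 'I_n -> 'I_d -> R) (X : {set 'I_n}) k (b L : R) :
  #|X| = k -> (0 < k)%N ->
  (forall q, in_unit_cube q -> (forall i, i \in X -> ~~ in_box (P i) q) -> box_vol q <= b) ->
  (forall q i, in_unit_cube q -> in_box (P i) q -> L <= box_vol q) ->
  1 - k%:R^-1 <= b -> 1 - L <= b ->
  star_disc P X <= b.
Proof.
move=> hX hk hE hL h1 h2; apply: ge_sup.
  exists (`| (#|[set i in X | in_box (P i) (fun=> 1)]|%:R / #|X|%:R) - box_vol (fun _ : 'I_d => (1:R)) |).
  by exists (fun=> 1); split => // i; rewrite ler01 lexx.
move=> e [q [hq ->]].
have /andP[v0 v1] := vol_01 hq.
set c := #|_|.
have hck : (c <= k)%N.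
  by rewrite -hX; apply: subset_leq_card; apply/fintype.subsetP => i; rewrite inE => /andP[].
have kpos : (0 : R) < k%:R by rewrite ltr0n.
rewrite hX.
case: (posnP c) => hc.
  rewrite hc mul0r sub0r normrN ger0_norm //; apply: hE => // i hi.
  apply/negP => hin; have : i \in [set i in X | in_box (P i) q] by rewrite inE hi hin.
  by move/eqP: hc; rewrite /c cards_eq0 => /eqP ->; rewrite inE.
have [i hi] : exists i, i \in [set i in X | in_box (P i) q].
  by apply/set0Pn; rewrite -card_gt0.
move: hi; rewrite inE => /andP[_ hin].
have hLv := hL q i hq hin.
have /andP[f0 f1] : 0 <= (c%:R : R) / k%:R <= 1 by apply: frac_01.
have fk : k%:R^-1 <= (c%:R : R) / k%:R.
  by rewrite ler_pdivlMr // mulVf ?gt_eqF // ler1n.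
rewrite ler_norml; apply/andP; split; lra.
Qed.
Ltac ifs := repeat match goal with |- context [if ?b then _ else _] => case: (boolP b) => ? end.

Lemma bern (R : realType) (x : R) n : 0 <= x <= 1 -> 1 - n%:R * x <= (1 - x)^+n.
Proof.
move=> /andP[x0 x1]; elim: n => [|n IH]; first by rewrite mul0r subr0 expr0.
rewrite exprS -addn1 natrD.
have hn : (0:R) <= n%:R by rewrite ler0n.
have hp : 0 <= (1 - x)^+n by rewrite exprn_ge0 // subr_ge0.
nra.
Qed.

Definition e0 (m N i : nat) : nat :=
  if (i < m)%N then (m - i)%N else if (i < m + N)%N then (N - (i - m))%N else 0%N.
Definition e1 (m N i : nat) : nat :=
  if (i < m)%N then i.+1 else if (i < m + N)%N then (i - m).+1 else i.

Definition pt (R : realType) d' n (rho : R) (m N : nat) (i : 'I_n) : 'I_d'.+2 -> R :=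
  fun c => if (c : nat) == 0%N then rho ^+ (e0 m N i)
           else if (c : nat) == 1%N then rho ^+ (e1 m N i) else rho ^+ m.

Definition gbox (R : realType) d' (rho : R) (N g : nat) : 'I_d'.+2 -> R :=
  fun c => if (c : nat) == 0%N then rho ^+ (N - g)
           else if (c : nat) == 1%N then rho ^+ g else 1.

Arguments pt {R} d' {n} rho m N i c.
Arguments gbox {R} d' rho N g c.

Definition c1 d' : 'I_d'.+2 := @Ordinal d'.+2 1 isT.

Lemma vol_split (R : realType) d' (q : 'I_d'.+2 -> R) :
  box_vol q = q ord0 * (q (c1 d') * \prod_(i < d') q (lift ord0 (lift ord0 i))).
Proof.
rewrite /box_vol !big_ord_recl.
by have -> : lift ord0 ord0 = c1 d' by apply/val_inj.
Qed.

Lemma vol_le_coord (R : realType) d (q : 'I_d -> R) c :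
  in_unit_cube q -> box_vol q <= q c.
Proof.
move=> hq; rewrite /box_vol (bigD1 c) //=.
have /andP[h0 h1] := hq c.
have hr : \prod_(i < d | i != c) q i <= 1 by apply: prodr_ile1 => i _; exact: hq.
have hr0 : 0 <= \prod_(i < d | i != c) q i by apply: prodr_ge0 => i _; case/andP: (hq i).
nra.
Qed.

Lemma vol_le01 (R : realType) d' (q : 'I_d'.+2 -> R) :
  in_unit_cube q -> box_vol q <= q ord0 * q (c1 d').
Proof.
move=> hq; rewrite vol_split.
have hr : \prod_(i < d') q (lift ord0 (lift ord0 i)) <= 1 by apply: prodr_ile1 => i _; exact: hq.
have hr0 : 0 <= \prod_(i < d') q (lift ord0 (lift ord0 i)) by apply: prodr_ge0 => i _; case/andP: (hq (lift ord0 (lift ord0 i))).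
have /andP[a0 a1] := hq ord0; have /andP[b0 b1] := hq (c1 d').
by rewrite mulrA ler_piMr // mulr_ge0.
Qed.

Lemma stair (R : realType) (rho q0 q1 : R) K :
  0 <= rho -> 0 <= q0 <= 1 -> 0 <= q1 <= 1 ->
  (forall t, (t < K)%N -> q0 <= rho ^+ (K - t) \/ q1 <= rho ^+ t.+1) ->
  q0 * q1 <= rho ^+ K.
Proof.
move=> r0 /andP[a0 a1] /andP[b0 b1] h.
suff : forall t, (t <= K)%N -> q0 * q1 <= rho ^+ K \/ q1 <= rho ^+ t.
  move=> /(_ K (leqnn K)) [//|hK]; nra.
elim=> [|t IH] ht; first by right; rewrite expr0.
case: (IH (ltnW ht)) => [|h1]; first by left.
case: (h t ht) => [h2|]; last by right.
left; have -> : rho ^+ K = rho ^+ (K - t) * rho ^+ t by rewrite -exprD subnK // ltnW.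
apply: ler_pM => //.
Qed.

Lemma pt_ge0 (R : realType) d' n (rho : R) m N (i : 'I_n) c :
  0 <= rho -> 0 <= pt d' rho m N i c.
Proof. by move=> r0; rewrite /pt; case: ifP => _; [|case: ifP => _]; apply: exprn_ge0. Qed.

Lemma empty_bound (R : realType) d' n (rho : R) m N (X : {set 'I_n}) K q :
  0 < rho -> rho < 1 -> rho ^+ m <= rho ^+ K ->
  (forall t, (t < K)%N -> exists2 i, i \in X & (e0 m N i = K - t)%N /\ e1 m N i = t.+1) ->
  in_unit_cube q -> (forall i, i \in X -> ~~ in_box (pt d' rho m N i) q) ->
  box_vol q <= rho ^+ K.
Proof.
move=> r0 r1 hmK hst hq hX.
case: (boolP [exists c : 'I_d'.+2, (1 < c)%N && (q c <= rho ^+ m)]).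
  move/existsP => [c /andP[_ hc]].
  by apply: le_trans (vol_le_coord c hq) _; apply: le_trans hc hmK.
rewrite negb_exists => /forallP hc.
apply: le_trans (vol_le01 hq) _; apply: stair; [exact: ltW | exact: hq | exact: hq |].
move=> t ht; have [i hi [he0 he1]] := hst t ht.
have := hX i hi; rewrite /in_box negb_forall => /existsP [c].
have hp0 : 0 <= pt d' rho m N i c by apply: pt_ge0; exact: ltW.
rewrite hp0 /= -leNgt => hcq.
have [c0|c0n] := eqVneq (c : nat) 0%N.
  left; have ec : c = ord0 by apply/val_inj.
  by move: hcq; rewrite ec /pt /= he0.
have [c1e|c1n] := eqVneq (c : nat) 1%N.
  right; have ec : c = c1 d' by apply/val_inj.
  by move: hcq; rewrite ec /pt /= he1.
exfalso; move: (hc c); rewrite negb_and -ltNge.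
have -> : (1 < c)%N by move: c0n c1n; case: (c : nat) => [|[|]].
move: hcq; rewrite /pt (negbTE c0n) (negbTE c1n) /= => h1 h2.
by move: (lt_le_trans h2 h1); rewrite ltxx.
Qed.

Lemma box_lower (R : realType) d' n (rho : R) N (i : 'I_n) q :
  0 < rho -> rho < 1 -> in_unit_cube q -> in_box (pt d' rho N.+1 N i) q ->
  (rho ^+ N.+1) ^+ d'.+2 <= box_vol q.
Proof.
move=> r0 r1 hq /forallP hb.
have hvis : (i < N.+1 + N)%N.
  rewrite ltnNge; apply/negP => hi.
  have := hb ord0; rewrite /pt /= /e0.
  have -> : (i < N.+1)%N = false by apply/negbTE; rewrite -leqNgt; apply: leq_trans hi; apply: leq_addr.
  rewrite ltnNge hi /= expr0 ler01 /= => h.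
  by have /andP[_ h1] := hq ord0; move: (lt_le_trans h h1); rewrite ltxx.
have hc : forall c, rho ^+ N.+1 <= pt d' rho N.+1 N i c.
  have hle : forall e, (e <= N.+1)%N -> rho ^+ N.+1 <= rho ^+ e.
    by move=> e he; apply: ler_wiXn2l => //; exact: ltW.
  move=> c; rewrite /pt; case: ifP => _; [|case: ifP => _]; apply: hle => //.
  - by rewrite /e0; ifs; lia.
  - by move: hvis; rewrite /e1; ifs; lia.
have -> : (rho ^+ N.+1) ^+ d'.+2 = \prod_(c < d'.+2) rho ^+ N.+1 by rewrite prodr_const card_ord.
rewrite /box_vol.
apply: ler_prod => c _; rewrite exprn_ge0 ?ltW //=.
by apply: le_lt_trans (hc c) _; case/andP: (hb c).
Qed.

Lemma gbox_only (R : realType) d' n (rho : R) N g (i : 'I_n) :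
  0 < rho -> rho < 1 -> (g <= N)%N ->
  in_box (pt d' rho N.+1 N i) (gbox d' rho N g) -> (i : nat) = g.
Proof.
move=> r0 r1 hg /forallP hb.
have := hb ord0; have := hb (c1 d'); rewrite /pt /gbox /= => /andP[_ h1] /andP[_ h0].
rewrite ltr_iXn2l // in h0; rewrite ltr_iXn2l // in h1.
move: h0 h1; rewrite /e0 /e1; ifs; lia.
Qed.

Lemma gbox_vol (R : realType) d' (rho : R) N g :
  (g <= N)%N -> box_vol (gbox d' rho N g) = rho ^+ N.
Proof.
move=> hg; rewrite vol_split /gbox /= big1 ?mulr1; first by rewrite -exprD subnK.
by move=> i _; rewrite /=.
Qed.

Lemma gbox_cube (R : realType) d' (rho : R) N g :
  0 <= rho -> rho <= 1 -> in_unit_cube (gbox d' rho N g).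
Proof.
move=> r0 r1 c; rewrite /gbox; case: ifP => _; [|case: ifP => _];
  rewrite ?exprn_ge0 ?exprn_ile1 ?ler01 ?lexx //.
Qed.

Lemma pt_cube (R : realType) d' n (rho : R) m N (i : 'I_n) :
  0 <= rho -> rho <= 1 -> in_unit_cube (pt d' rho m N i).
Proof.
move=> r0 r1 c; rewrite /pt; case: ifP => _; [|case: ifP => _];
  rewrite ?exprn_ge0 ?exprn_ile1 //.
Qed.

Lemma pt_inj (R : realType) d' n (rho : R) N :
  0 < rho -> rho < 1 -> injective (pt d' rho N.+1 N : 'I_n -> _).
Proof.
move=> r0 r1 i i' h.
have h0 := congr1 (fun f => f ord0) h; have h1 := congr1 (fun f => f (c1 d')) h.
move: h0 h1; rewrite /pt /= => /ieexprIn h0 /ieexprIn h1.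
have {}h0 := h0 r0 (negbT (lt_eqF r1)); have {}h1 := h1 r0 (negbT (lt_eqF r1)).
apply/val_inj => /=; move: h0 h1; rewrite /e0 /e1; ifs; lia.
Qed.


Lemma shift_inj n' a k : (a + k <= n'.+1)%N ->
  injective (fun x : 'I_k => (inord (a + x) : 'I_n'.+1)).
Proof.
move=> h x y /(congr1 val) /=; have ox := ltn_ord x; have oy := ltn_ord y.
rewrite !inordK; [|lia|lia] => e; apply/val_inj => /=; lia.
Qed.

Lemma card_shift n' a k : (a + k <= n'.+1)%N ->
  #|[set (inord (a + x) : 'I_n'.+1) | x : 'I_k]| = k.
Proof. by move=> h; rewrite card_imset ?card_ord //; apply: shift_inj. Qed.

Lemma mem_shift n' a k (i : 'I_n'.+1) : (a + k <= n'.+1)%N ->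
  i \in [set (inord (a + x) : 'I_n'.+1) | x : 'I_k] -> (a <= i < a + k)%N.
Proof.
move=> h /imsetP [x _ ->]; have ox := ltn_ord x; rewrite inordK; lia.
Qed.

Lemma shift_mem n' a k t : (a + k <= n'.+1)%N -> (t < k)%N ->
  (inord (a + t) : 'I_n'.+1) \in [set (inord (a + x) : 'I_n'.+1) | x : 'I_k].
Proof. by move=> h ht; apply/imsetP; exists (Ordinal ht). Qed.

Lemma e_S n' N t : (N.+1 + N <= n'.+1)%N -> (t < N)%N ->
  e0 N.+1 N (inord (N.+1 + t) : 'I_n'.+1) = (N - t)%N /\
  e1 N.+1 N (inord (N.+1 + t) : 'I_n'.+1) = t.+1.
Proof. by move=> h ht; rewrite /e0 /e1 inordK; [ifs; split; lia | lia]. Qed.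

Lemma e_T n' N t : (N.+1 <= n'.+1)%N -> (t < N.+1)%N ->
  e0 N.+1 N (inord (0 + t) : 'I_n'.+1) = (N.+1 - t)%N /\
  e1 N.+1 N (inord (0 + t) : 'I_n'.+1) = t.+1.
Proof. by move=> h ht; rewrite /e0 /e1 inordK; [ifs; split; lia | lia]. Qed.

Lemma inord_eq n' (i : 'I_n'.+1) g : (g < n'.+1)%N -> (i : nat) = g -> i = inord g.
Proof. by move=> hg e; apply/val_inj; rewrite /= inordK. Qed.

Theorem proposition1 (R : realType) (d n k j : nat) :
  (2 <= d)%N -> (0 < n)%N -> (0 < k)%N -> (0 < j)%N -> (k <= n)%N ->
  (((2 * k <= n)%N /\ (j < k)%N) \/ ((n < 2 * k)%N /\ (j < n - k)%N)) ->
  exists (P : 'I_n -> 'I_d -> R) (S : {set 'I_n}),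
    [/\ injective P, (forall i, in_unit_cube (P i)), #|S| = k,
        local_min_SDSSP j P S &
        ~ global_min_SDSSP k P S].
Proof.
move=> hd hn hk hj hkn hcase.
case: d hd => [|[|d']] // _.
case: n hn hkn hcase => [|n'] // _ hkn hcase.
have [N [hjN hNk hNn]] : exists N, [/\ (j <= N)%N, (N < k)%N & (N.+1 + k <= n'.+1)%N].
  exists (minn k (n'.+1 - k)).-1; split; lia.
pose K := (2 * k * N.+1 * d'.+2)%N.
pose eps : R := K%:R^-1.
pose a : R := (N.+1 * d'.+2)%:R * eps.
pose rho : R := 1 - eps.
have Kpos : (0 : R) < K%:R by rewrite ltr0n /K; lia.
have eps0 : 0 < eps by rewrite invr_gt0.
have ha : k%:R^-1 = 2 * a.
  rewrite /a /eps /K !natrM; field.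
  have := ler0n R d'; have := ler0n R N; have : (1:R) <= k%:R by rewrite ler1n.
  by move=> *; apply/and3P; split; apply: lt0r_neq0; lra.
have hkinv : (k%:R : R)^-1 <= 1 by rewrite invf_le1 ?ler1n ?ltr0n.
have hepsa : N.+1%:R * eps <= a.
  have -> : a = d'.+2%:R * (N.+1%:R * eps) by rewrite /a natrM; ring.
  by apply: ler_peMl; [rewrite mulr_ge0 // ltW | rewrite ler1n].
have hepsN : eps <= N.+1%:R * eps.
  have : (1:R) <= N.+1%:R by rewrite ler1n.
  move=> *; nra.
have rho0 : 0 < rho by rewrite /rho; lra.
have rho1 : rho < 1 by rewrite /rho; lra.
have hy : 1 - a <= rho ^+ N.+1.
  by apply: le_trans (bern _ _) => //; [lra | apply/andP; split; lra].
have hY : 1 - a <= (rho ^+ N.+1) ^+ d'.+2.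
  rewrite -exprM; apply: le_trans (bern _ _); first by rewrite /a; lra.
  by apply/andP; split; lra.
have hrN : rho ^+ N.+1 < rho ^+ N by rewrite ltr_iXn2l.
pose P := pt d' rho N.+1 N : 'I_n'.+1 -> 'I_d'.+2 -> R.
pose S : {set 'I_n'.+1} := [set inord (N.+1 + x) | x : 'I_k].
pose T : {set 'I_n'.+1} := [set inord (0 + x) | x : 'I_k].
have hNn' : (0 + k <= n'.+1)%N by rewrite add0n.
have cardS : #|S| = k by apply: card_shift.
have cardT : #|T| = k by apply: card_shift.
have memS : forall i, i \in S -> (N.+1 <= i)%N.
  by move=> i /(mem_shift hNn) /andP[].
have hlow : forall (X : {set 'I_n'.+1}) g, (g <= N)%N -> inord g \notin X -> rho ^+ N <= star_disc P X.
  move=> X g hg hgX.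
  have := disc_ge P X (@gbox_cube R d' rho N g (ltW rho0) (ltW rho1)).
  have -> : [set i in X | in_box (P i) (gbox d' rho N g)] = finset.set0.
    apply/setP => i; rewrite !inE; apply/negP => /andP [hiX hib].
    have := gbox_only rho0 rho1 hg hib => hig.
    have hgn : (g < n'.+1)%N by clear -hg hNn; lia.
    have ei : i = inord g by apply: inord_eq.
    by move: hgX; rewrite -ei hiX.
  rewrite cards0 mul0r sub0r normrN gbox_vol // ger0_norm //.
  by rewrite exprn_ge0 // ltW.
have hSup : star_disc P S <= rho ^+ N.
  apply: (disc_le cardS hk (L := (rho ^+ N.+1) ^+ d'.+2)).
  - move=> q hq hX; apply: (empty_bound (m := N.+1) (N := N) (X := S)) => //.
      exact: ltW.
    move=> t ht; exists (inord (N.+1 + t)).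
      by apply: shift_mem => //; clear -ht hNk; lia.
    by apply: e_S => //; clear -hNn hNk; lia.
  - by move=> q i hq hb; apply: box_lower hb.
  - lra.
  - have := ltW hrN; lra.
have hTup : star_disc P T <= rho ^+ N.+1.
  apply: (disc_le cardT hk (L := (rho ^+ N.+1) ^+ d'.+2)).
  - move=> q hq hX; apply: (empty_bound (m := N.+1) (N := N) (X := T)) => //.
    move=> t ht; exists (inord (0 + t)).
      by apply: shift_mem => //; clear -ht hNk; lia.
    by apply: e_T => //; clear -hNn; lia.
  - by move=> q i hq hb; apply: box_lower hb.
  - lra.
  - lra.
have hSlow : rho ^+ N <= star_disc P S.
  apply: (hlow S 0%N) => //; apply/negP => /memS; rewrite inordK //.
exists P, S; split => //.
- exact: pt_inj.
- by move=> i; apply: pt_cube; apply: ltW.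
- move=> S' [A [B [hA hB hAj hBj ->]]] hlt.
  have [g hg hgB] : exists2 g, (g <= N)%N & inord g \notin B.
    case: (boolP [exists x : 'I_N.+1, inord (0 + x) \notin B]).
      by move/existsP => [x hx]; exists x => //; rewrite -ltnS.
    rewrite negb_exists => /forallP hall.
    have hsub : [set (inord (0 + x) : 'I_n'.+1) | x : 'I_N.+1] \subset B.
      apply/fintype.subsetP => i /imsetP [x _ ->]; have := hall x; by rewrite negbK.
    have := subset_leq_card hsub; rewrite card_shift; last by clear -hNn; lia.
    by rewrite hBj; clear -hjN; lia.
  have hgS' : inord g \notin (S :\: A) :|: B.
    rewrite !inE negb_or hgB andbT negb_and; apply/orP; right.
    have hgn : (g < n'.+1)%N by clear -hg hNn; lia.
    by apply/negP => /memS; rewrite inordK //; clear -hg; lia.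
  have := hlow _ _ hg hgS'; lra.
- move=> hglob; have := hglob T cardT; lra.
Qed.
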